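(* Let $\beta_n,\beta_d$ be coprime positive integers with $\beta_n>\beta_d$, put $\beta=\beta_n/\beta_d$, let $\zeta\geq 1$ be an integer and let $\epsilon_s\in(0,1)$. Consider the time-homogeneous Markov chain on the finite state space $\mathcal{S}=\{k/\beta_d : k=0,1,\dots,\beta_n(\zeta+1)\}$ with the following transition probabilities from a state $x\in\mathcal{S}$: (i) if $x\le 1$ (''idle'' state): go to $\beta$ with probability $\epsilon_s$ and to $0$ with probability $1-\epsilon_s$; (ii) if $1<x\le \beta\zeta+1$ (''safe'' state): go to $x+\beta-1$ with probability $\epsilon_s$ and to $x-1$ with probability $1-\epsilon_s$; (iii) if $x>\beta\zeta+1$ (''hazard'' state): go to $x-1$ with probability $1$. Then this Markov chain is irreducible (every state is reachable from every state) and aperiodic.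
   Context: This chain models a two-staged adaptive successive cancellation list decoder: a fast decoder decodes each incoming codeword in time $t_s$ and fails independently with probability $\epsilon_s$; failed codewords are stored in a buffer of capacity $\zeta$ codewords and re-decoded by a slow decoder needing time $\beta t_s$. The state $x=\beta i_\zeta+i_\beta$ is the total remaining time (in units of $t_s$) needed to clear the buffer, where $i_\zeta\in\{0,\dots,\zeta\}$ is the number of buffered codewords and $i_\beta\in\{i/\beta_d: 0\le i\le \beta_n\}$ is the remaining decoding time of the slow decoder; one step of the chain corresponds to time $t_s$. The transition rules above are the paper's definition of the model. *)

(* Defs.v *)
From mathcomp Require Import all_boot all_order all_algebra.
Set Implicit Arguments. Unset Strict Implicit. Unset Printing Implicit Defensive.
Import Order.TTheory GRing.Theory Num.Theory.
Local Open Scope ring_scope.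

(* State space S = { k / bd : k = 0 .. bn*(zeta+1) }, indexed by k : 'I_(bn*(zeta+1)).+1 *)
Definition nstates (bn zeta : nat) : nat := (bn * zeta.+1)%N.+1.

Definition state_val (R : realFieldType) (bd : nat) (k : nat) : R := k%:R / bd%:R.

Definition trans (R : realFieldType) (bn bd zeta : nat) (eps : R)
    (i j : 'I_(nstates bn zeta)) : R :=
  let x := @state_val R bd i in
  let y := @state_val R bd j in
  let beta : R := bn%:R / bd%:R in
  if x <= 1 then
    (if y == beta then eps else 0) + (if y == 0 then 1 - eps else 0)
  else if x <= beta * zeta%:R + 1 then
    (if y == x + beta - 1 then eps else 0) + (if y == x - 1 then 1 - eps else 0)
  else
    (if y == x - 1 then 1 else 0).

Definition trans_mx (R : realFieldType) (bn bd zeta : nat) (eps : R)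
  : 'M[R]_(nstates bn zeta) := \matrix_(i, j) @trans R bn bd zeta eps i j.

Definition irreducible_mc (R : realFieldType) (n : nat) (P : 'M[R]_n.+1) : Prop :=
  forall i j : 'I_n.+1, exists m : nat, 0 < (P ^+ m) i j.

(* aperiodic: every state has period 1, i.e. gcd {m >= 1 : P^m i i > 0} = 1,
   expressed as: the only common divisor of all return times is 1. *)
Definition aperiodic_mc (R : realFieldType) (n : nat) (P : 'M[R]_n.+1) : Prop :=
  forall i : 'I_n.+1, forall d : nat,
    (forall m : nat, (0 < m)%N -> 0 < (P ^+ m) i i -> (d %| m)%N) -> d = 1%N.

(* Main.v *)
Require Import Defs.
From mathcomp Require Import all_boot all_order all_algebra.
From mathcomp Require zify.
From mathcomp Require Import ring lra.
Import Order.TTheory GRing.Theory Num.Theory.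
Local Open Scope ring_scope.

Lemma pow_ge0 (R : realFieldType) n (P : 'M[R]_n.+1) :
  (forall i j, 0 <= P i j) -> forall m i j, 0 <= (P ^+ m) i j.
Proof.
move=> H; elim=> [|m IH] i j.
  by rewrite expr0 !mxE ler0n.
rewrite exprS mxE; apply: sumr_ge0 => k _; exact: mulr_ge0.
Qed.

Lemma pow_pos_trans (R : realFieldType) n (P : 'M[R]_n.+1) :
  (forall i j, 0 <= P i j) -> forall m1 m2 i k j,
  0 < (P ^+ m1) i k -> 0 < (P ^+ m2) k j -> 0 < (P ^+ (m1 + m2)) i j.
Proof.
move=> H m1 m2 i k j h1 h2.
rewrite exprD mxE (bigD1 k) //=.
have h3 : 0 <= \sum_(i0 < n.+1 | i0 != k) (P ^+ m1) i i0 * (P ^+ m2) i0 j.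
  by apply: sumr_ge0 => l _; apply: mulr_ge0; apply: pow_ge0.
have h4 := mulr_gt0 h1 h2.
lra.
Qed.

Lemma pow_pos0 (R : realFieldType) n (P : 'M[R]_n.+1) i : 0 < (P ^+ 0) i i.
Proof. by rewrite expr0 mxE eqxx ltr01. Qed.

Lemma pow_pos1 (R : realFieldType) n (P : 'M[R]_n.+1) i j : 0 < P i j -> 0 < (P ^+ 1) i j.
Proof. by rewrite expr1. Qed.


Lemma E1 (R : realFieldType) (bd k : nat) : (0 < bd)%N ->
  ((k%:R / bd%:R <= 1 :> R) = (k <= bd)%N).
Proof. move=> hbd; by rewrite ler_pdivrMr ?ltr0n // mul1r ler_nat. Qed.

Lemma E2 (R : realFieldType) (bn bd zeta k : nat) : (0 < bd)%N ->
  ((k%:R / bd%:R <= bn%:R / bd%:R * zeta%:R + 1 :> R) = (k <= bn * zeta + bd)%N).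
Proof.
move=> hbd.
have -> : bn%:R / bd%:R * zeta%:R + 1 = (bn * zeta + bd)%:R / bd%:R :> R.
  rewrite natrD natrM; field; by rewrite pnatr_eq0 -lt0n.
by rewrite ler_pM2r ?invr_gt0 ?ltr0n ?ler_nat.
Qed.

Lemma trans_A (R : realFieldType) (bn bd zeta : nat) (eps : R) (i j : 'I_(nstates bn zeta)) :
  (0 < bd)%N -> 0 < eps -> eps < 1 ->
  (i <= bd)%N -> val j = bn -> 0 < @trans R bn bd zeta eps i j.
Proof.
move=> hbd he0 he1 hi hj; rewrite /trans /state_val E1 // hi hj eqxx.
case: ifP => _; lra.
Qed.

Lemma trans_B (R : realFieldType) (bn bd zeta : nat) (eps : R) (i j : 'I_(nstates bn zeta)) :
  (0 < bd)%N -> 0 < eps -> eps < 1 ->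
  (i <= bd)%N -> val j = 0%N -> 0 < @trans R bn bd zeta eps i j.
Proof.
move=> hbd he0 he1 hi hj; rewrite /trans /state_val E1 // hi hj mul0r eqxx.
case: ifP => _; lra.
Qed.

Lemma trans_C (R : realFieldType) (bn bd zeta : nat) (eps : R) (i j : 'I_(nstates bn zeta)) :
  (0 < bd)%N -> 0 < eps -> eps < 1 ->
  (bd < i <= bn * zeta + bd)%N -> val j = (i + bn - bd)%N -> 0 < @trans R bn bd zeta eps i j.
Proof.
move=> hbd he0 he1 /andP[h1 h2] hj; rewrite /trans /state_val E1 // E2 // h2 hj.
rewrite ifF; last by apply/negbTE; rewrite -ltnNge.
have -> : ((i + bn - bd)%N%:R / bd%:R == i%:R / bd%:R + bn%:R / bd%:R - 1 :> R).
  apply/eqP; rewrite natrB; last by rewrite (leq_trans (ltnW h1)) ?leq_addr.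
  rewrite natrD; field; by rewrite pnatr_eq0 -lt0n.
case: ifP => _; lra.
Qed.

Lemma trans_D (R : realFieldType) (bn bd zeta : nat) (eps : R) (i j : 'I_(nstates bn zeta)) :
  (0 < bd)%N -> 0 < eps -> eps < 1 ->
  (bd < i)%N -> (val j + bd)%N = i -> 0 < @trans R bn bd zeta eps i j.
Proof.
move=> hbd he0 he1 h1 hj; rewrite /trans /state_val E1 // E2 //.
rewrite ifF; last by apply/negbTE; rewrite -ltnNge.
have -> : (j%:R / bd%:R == i%:R / bd%:R - 1 :> R).
  apply/eqP; rewrite -hj natrD; field; by rewrite pnatr_eq0 -lt0n.
case: ifP => _; first (case: ifP => _; lra).
lra.
Qed.
Module NN.
Import zify.
Local Open Scope nat_scope.
Definition f (bn bd x : nat) := if (x <= 2*bd)%N then x + (bn - bd) else x - bd.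

Lemma f_in bn bd x : (0 < bd < bn)%N -> (bd < x <= bd + bn)%N -> (bd < f bn bd x <= bd + bn)%N.
Proof. rewrite /f; case: ifP; lia. Qed.

Lemma iter_in bn bd x k : (0 < bd < bn)%N -> (bd < x <= bd + bn)%N -> (bd < iter k (f bn bd) x <= bd + bn)%N.
Proof. move=> h hx; elim: k => [//|k IH] /=; exact: f_in. Qed.

Lemma iter_f bn bd x k : (0 < bd < bn)%N -> (bd < x <= bd + bn)%N ->
  iter k (f bn bd) x = (bd.+1 + ((x - bd.+1) + k * (bn - bd)) %% bn)%N.
Proof.
move=> h hx; elim: k => [|k IH] /=.
  rewrite mul0n addn0 modn_small; lia.
rewrite IH /f.
have hr : ((x - bd.+1 + k * (bn - bd)) %% bn < bn)%N by rewrite ltn_mod; lia.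
set r := (x - bd.+1 + k * (bn - bd)) %% bn in hr *.
have -> : (x - bd.+1 + k.+1 * (bn - bd)) %% bn = (r + (bn - bd)) %% bn.
  by rewrite /r modnDml mulSn; congr (_ %% _); lia.
case: ifP => hle.
  rewrite modn_small; lia.
have -> : (r + (bn - bd) = bn + (r - bd))%N by lia.
rewrite modnDl modn_small; lia.
Qed.

Lemma hit bn bd r0 t : coprime bn bd -> (0 < bd < bn)%N -> (t < bn)%N ->
  exists k, ((r0 + k * (bn - bd)) %% bn = t)%N.
Proof.
move=> hc h ht.
have hg : gcdn bn (bn - bd) = 1%N.
  have e : bn = (bd + (bn - bd))%N by lia.
  rewrite gcdnC {2}e gcdnDr gcdnC -gcdnDl -e gcdnC; exact/eqP.
have [u hu] := @Bezoutl bn (bn - bd) ltac:(lia).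
rewrite hg => /dvdnP [c hcu].
set s := (r0 + bn - t)%N.
exists (u * s)%N.
have e1 : (s + u * s * (bn - bd) = s * c * bn)%N.
  nia.
have hc1 : (0 < c)%N.
  case: c hcu {e1}; last by [].
  by rewrite mul0n.
have e2 : (r0 + u * s * (bn - bd) = (s * c - 1) * bn + t)%N.
  have : (s <= s * c)%N by rewrite leq_pmulr.
  nia.
by rewrite e2 modnMDl modn_small.
Qed.
Ltac nlia := lia.
End NN.

Theorem proposition2 (R : realFieldType) (bn bd zeta : nat) (eps : R)
  (hbd : (0 < bd)%N) (hbnd : (bd < bn)%N) (hcop : coprime bn bd)
  (hzeta : (1 <= zeta)%N) (heps0 : 0 < eps) (heps1 : eps < 1) :
  irreducible_mc (trans_mx bn bd zeta eps) /\ aperiodic_mc (trans_mx bn bd zeta eps).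
Proof.
set P := trans_mx bn bd zeta eps.
set N := (bn * zeta.+1)%N.
have Pge0 : forall i j, 0 <= P i j.
  move=> i j; rewrite /P /trans_mx mxE /trans.
  by repeat case: ifP => _; lra.
have PE : forall i j, P i j = @trans R bn bd zeta eps i j by move=> i j; rewrite /P mxE.
pose rc (i j : 'I_(nstates bn zeta)) := exists m, 0 < (P ^+ m) i j.
have rc_trans : forall i k j, rc i k -> rc k j -> rc i j.
  move=> i k j [m1 h1] [m2 h2]; exists (m1 + m2)%N; exact: pow_pos_trans h1 h2.
have rc_step : forall i j, 0 < P i j -> rc i j.
  by move=> i j h; exists 1%N; rewrite expr1.
have rc_refl : forall i, rc i i by move=> i; exists 0%N; exact: pow_pos0.
pose st k := (inord k : 'I_(nstates bn zeta)).
have stK : forall k, (k <= N)%N -> val (st k) = k.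
  by move=> k hk; rewrite /st /= inordK // ltnS.
have hbz : (bn <= bn * zeta)%N by rewrite -{1}(muln1 bn) leq_mul2l hzeta orbT.
have hN : N = (bn * zeta + bn)%N by rewrite /N mulnS addnC.
have toZero : forall k, (k <= N)%N -> rc (st k) (st 0).
  elim/ltn_ind => k IH hk.
  case: (leqP k bd) => hkb.
    apply: rc_step; rewrite PE; apply: trans_B => //; first by rewrite stK.
    by rewrite stK.
  apply: (rc_trans _ (st (k - bd)%N)); last first.
    apply: IH; NN.nlia.
  apply: rc_step; rewrite PE; apply: trans_D => //; first by rewrite stK.
  rewrite !stK //; NN.nlia.
have fstep : forall z, (bd < z <= bd + bn)%N -> rc (st z) (st (NN.f bn bd z)).
  move=> z hz.
  rewrite /NN.f; case: ifP => hle.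
    apply: rc_step; rewrite PE; apply: trans_C => //.
      rewrite stK //; NN.nlia.
    rewrite !stK //; NN.nlia.
  apply: rc_step; rewrite PE; apply: trans_D => //; first (rewrite stK //; NN.nlia).
  rewrite !stK //; NN.nlia.
have hbd2 : (0 < bd < bn)%N by rewrite hbd hbnd.
have itr : forall k x, (bd < x <= bd + bn)%N -> rc (st x) (st (iter k (NN.f bn bd) x)).
  move=> k x hx; elim: k => [|k IH] /=; first exact: rc_refl.
  apply: (rc_trans _ _ _ IH); apply: fstep; exact: NN.iter_in.
have hbnw : (bd < bn <= bd + bn)%N by rewrite hbnd leq_addl.
have window : forall y, (bd < y <= bd + bn)%N -> rc (st bn) (st y).
  move=> y hy.
  have hy' : (y - bd.+1 < bn)%N by NN.nlia.
  have [k hk] := @NN.hit bn bd (bn - bd.+1) (y - bd.+1) hcop hbd2 hy'.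
  have := itr k bn hbnw; rewrite NN.iter_f // hk.
  have -> : (bd.+1 + (y - bd.+1) = y)%N by NN.nlia.
  done.
have z2bn : rc (st 0) (st bn).
  apply: rc_step; rewrite PE; apply: trans_A => //; rewrite stK //; NN.nlia.
have fromZero : forall j, (j <= N)%N -> rc (st 0) (st j).
  elim/ltn_ind => j IH hj.
  case: (posnP j) => [->|hj0]; first exact: rc_refl.
  case: (leqP j bd) => hjb.
    have hw : (bd < j + bd <= bd + bn)%N by NN.nlia.
    apply: (rc_trans _ _ _ z2bn); apply: (rc_trans _ _ _ (window _ hw)).
    apply: rc_step; rewrite PE; apply: trans_D => //; first (rewrite stK //; NN.nlia).
    rewrite !stK //; NN.nlia.
  case: (leqP j (bd + bn)) => hjw.
    apply: (rc_trans _ _ _ z2bn); apply: window; NN.nlia.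
  apply: (rc_trans _ (st (j - (bn - bd))%N)).
    apply: IH; NN.nlia.
  apply: rc_step; rewrite PE; apply: trans_C => //.
    rewrite stK //; NN.nlia.
  rewrite !stK //; NN.nlia.
have rc_all : forall i j, rc i j.
  move=> i j; apply: (rc_trans _ (st 0)).
    by rewrite -[i]inord_val; apply: toZero; rewrite -ltnS.
  by rewrite -[j]inord_val; apply: fromZero; rewrite -ltnS.
split; first exact: rc_all.
move=> i d hd.
have [m1 h1] := rc_all i (st 0).
have [m2 h2] := rc_all (st 0) i.
have h00 : 0 < (P ^+ 1) (st 0) (st 0).
  rewrite expr1 PE; apply: trans_B => //; rewrite stK //.
have r1 : 0 < (P ^+ (m1 + 1 + m2)) i i.
  exact: (@pow_pos_trans _ _ P Pge0 _ _ _ _ _ (@pow_pos_trans _ _ P Pge0 _ _ _ _ _ h1 h00) h2).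
have r2 : 0 < (P ^+ (m1 + 1 + 1 + m2)) i i.
  exact: (@pow_pos_trans _ _ P Pge0 _ _ _ _ _ (@pow_pos_trans _ _ P Pge0 _ _ _ _ _ (@pow_pos_trans _ _ P Pge0 _ _ _ _ _ h1 h00) h00) h2).
have d1 : (d %| m1 + 1 + m2)%N by apply: (hd _ _ r1); NN.nlia.
have d2 : (d %| m1 + 1 + 1 + m2)%N by apply: (hd _ _ r2); NN.nlia.
have e : (m1 + 1 + 1 + m2 = (m1 + 1 + m2) + 1)%N by NN.nlia.
move: d2; rewrite e (dvdn_addr _ d1) dvdn1; exact/eqP.
Qed.
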